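(* Let $(V_1,\dots,V_n)$ be an $n$-tuple of doubly non-commuting isometries on $H$ and let $k\ge0$. Then for all $i\ne j$: (1) $V_i$ commutes with $V_j^kV_j^{*k}$; (2) $V_i^*$ commutes with $V_j^kV_j^{*k}$; (3) $V_i$ and $V_i^*$ commute with $V_j^k(\mathbf 1-V_jV_j^* )V_j^{*k}$.
   Context: Fix $n\ge1$ and $z_{ij}\in\mathbb T$ ($i\ne j$) with $z_{ji}=\overline{z_{ij}}$; $(V_1,\dots,V_n)$ is doubly non-commuting if the $V_i$ are isometries on $H$ with $V_i^*V_j=\overline{z_{ij}}V_jV_i^*$ for $i\ne j$. $\mathbf 1$ is the identity operator. *)

(* Defs.v *)
From mathcomp Require Import all_boot all_order all_algebra.
From mathcomp Require Export complex.
Set Implicit Arguments. Unset Strict Implicit. Unset Printing Implicit Defensive.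
Import Order.TTheory GRing.Theory Num.Theory.
Local Open Scope ring_scope.

Definition is_inner_product (R : rcfType) (H : lmodType R[i])
  (ip : H -> H -> R[i]) : Prop :=
  [/\ (forall (a : R[i]) x y w, ip (a *: x + y) w = a * ip x w + ip y w),
      (forall x y, ip y x = (ip x y)^*),
      (forall x, 0 <= ip x x) &
      (forall x, ip x x = 0 -> x = 0)].

Definition is_adjoint (R : rcfType) (H : lmodType R[i])
  (ip : H -> H -> R[i]) (T S : H -> H) : Prop :=
  forall x y, ip (T x) y = ip x (S y).

Definition is_isometry (R : rcfType) (H : lmodType R[i])
  (ip : H -> H -> R[i]) (T : H -> H) : Prop :=
  forall x, ip (T x) (T x) = ip x x.

Definition doubly_noncommuting (R : rcfType) (H : lmodType R[i])
  (ip : H -> H -> R[i]) (n : nat) (z : 'I_n -> 'I_n -> R[i])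
  (V Vs : 'I_n -> H -> H) : Prop :=
  (forall i, is_adjoint ip (V i) (Vs i)) /\
  (forall i, is_isometry ip (V i)) /\
  (forall i j, i != j -> forall x, Vs i (V j x) = (z i j)^* *: V j (Vs i x)).

(* Main.v *)
Require Import Defs.
From mathcomp Require Import all_boot all_order all_algebra.
From mathcomp Require Import complex.
From mathcomp Require Import ring.
Import Order.TTheory GRing.Theory Num.Theory.
Local Open Scope ring_scope.

Theorem corollary3p2 (R : rcfType) (H : lmodType R[i]) (ip : H -> H -> R[i])
  (n : nat) (z : 'I_n -> 'I_n -> R[i]) (V Vs : 'I_n -> H -> H) :
  is_inner_product ip ->
  (forall i j, i != j -> `|z i j| = 1) ->
  (forall i j, i != j -> z j i = (z i j)^*) ->
  doubly_noncommuting ip z V Vs ->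
  forall (k : nat) (i j : 'I_n), i != j ->
    let Q := fun x => iter k (V j) (iter k (Vs j) x) in
    let P := fun x => iter k (V j) (x - V j (Vs j x)) in
    let Pk := fun x => P (iter k (Vs j) x) in
    [/\ (forall x, V i (Q x) = Q (V i x)),
        (forall x, Vs i (Q x) = Q (Vs i x)),
        (forall x, V i (Pk x) = Pk (V i x)) &
        (forall x, Vs i (Pk x) = Pk (Vs i x))].
Proof.
move=> [ipL ipC ipP ipDf] zn zc [adj [iso dnc]] k i j ij Q P Pk.
have ip0l : forall w, ip 0 w = 0.
  move=> w; have h := ipL 1 0 0 w.
  rewrite scaler0 add0r mul1r -{1}[ip 0 w]addr0 in h; exact: esym (addrI _ h).
have ipD : forall x y w, ip (x + y) w = ip x w + ip y w.
  by move=> x y w; have := ipL 1 x y w; rewrite scale1r mul1r.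
have ipZ : forall a x w, ip (a *: x) w = a * ip x w.
  by move=> a x w; rewrite -[a *: x]addr0 ipL ip0l addr0.
have ipB : forall x y w, ip (x - y) w = ip x w - ip y w.
  by move=> x y w; rewrite ipD -scaleN1r ipZ mulN1r.
have ipDr : forall x y w, ip w (x + y) = ip w x + ip w y.
  by move=> x y w; rewrite !(ipC _ w) ipD rmorphD.
have ipZr : forall a x w, ip w (a *: x) = a^* * ip w x.
  by move=> a x w; rewrite !(ipC _ w) ipZ rmorphM.
have ip0r : forall w, ip w 0 = 0.
  by move=> w; rewrite (ipC 0 w) ip0l rmorph0.
have ext : forall u v, (forall w, ip u w = ip v w) -> u = v.
  move=> u v h; apply/eqP; rewrite -subr_eq0; apply/eqP/ipDf.
  by rewrite ipB !h subrr.
have extr : forall u v, (forall w, ip w u = ip w v) -> u = v.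
  by move=> u v h; apply: ext => w; rewrite (ipC w u) (ipC w v) h.
have adjs : forall l x y, ip (Vs l x) y = ip x (V l y).
  by move=> l x y; rewrite (ipC y (Vs l x)) -adj -ipC.
have VD : forall l x y, V l (x + y) = V l x + V l y.
  by move=> l x y; apply: ext => w; rewrite adj !ipD -!adj.
have VZ : forall l a x, V l (a *: x) = a *: V l x.
  by move=> l a x; apply: ext => w; rewrite adj !ipZ -!adj.
have VB : forall l x y, V l (x - y) = V l x - V l y.
  by move=> l x y; rewrite VD -scaleN1r VZ scaleN1r.
have VsD : forall l x y, Vs l (x + y) = Vs l x + Vs l y.
  by move=> l x y; apply: ext => w; rewrite adjs !ipD -!adjs.
have VsZ : forall l a x, Vs l (a *: x) = a *: Vs l x.
  by move=> l a x; apply: ext => w; rewrite adjs !ipZ -!adjs.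
have VsB : forall l x y, Vs l (x - y) = Vs l x - Vs l y.
  by move=> l x y; rewrite VsD -scaleN1r VsZ scaleN1r.
have polar : forall l x y, ip (V l x) (V l y) = ip x y.
  move=> l x y.
  have E : forall a, a^* * (ip (V l x) (V l y) - ip x y)
                   + a * (ip (V l y) (V l x) - ip y x) = 0.
    move=> a; have h := iso l (x + a *: y).
    rewrite VD VZ !ipD !ipDr !ipZ !ipZr !iso in h.
    move/eqP: h; rewrite -subr_eq0 => /eqP h; rewrite -h; ring.
  have E1 := E 1; have Ei := E 'i.
  rewrite rmorph1 conjCi in E1 Ei.
  have I2 : 'i * 'i = -1 :> R[i] by rewrite -expr2 sqrCi.
  set p := _ - ip x y in E1 Ei *; set q := _ - ip y x in E1 Ei.
  have key : 2 * p = (1 * p + 1 * q) + 'i * (- 'i * p + 'i * q)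
                      + (1 + 'i * 'i) * (p - q) by ring.
  rewrite E1 Ei I2 mulr0 addrN mul0r !addr0 in key.
  apply/eqP; rewrite -subr_eq0; apply/eqP.
  by move/eqP: key; rewrite mulf_eq0 pnatr_eq0 /= => /eqP.
have VsV : forall l x, Vs l (V l x) = x.
  by move=> l x; apply: extr => w; rewrite -adj polar.
have zz : z i j * (z i j)^* = 1 by rewrite -normCK zn // expr1n.
have zz' : (z i j)^* * z i j = 1 by rewrite mulrC.
have ji : j != i by rewrite eq_sym.
have zji : (z j i)^* = z i j by rewrite zc // conjCK.
have R1 : forall x, Vs i (V j x) = (z i j)^* *: V j (Vs i x) by exact: dnc.
have R2 : forall x, Vs j (V i x) = z i j *: V i (Vs j x).
  by move=> x; rewrite dnc // zji.
have Comm0 : forall x, V i (V j x) = z i j *: V j (V i x).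
  move=> x; apply/eqP; rewrite -subr_eq0; apply/eqP.
  set a := _ - _.
  have s1 : Vs i a = 0.
    by rewrite /a VsB VsZ VsV R1 VsV scalerA zz scale1r subrr.
  have s2 : Vs j a = 0.
    by rewrite /a VsB VsZ VsV R2 VsV subrr.
  by apply: ipDf; rewrite {1}/a ipB ipZ adj s1 ip0r adj s2 ip0r mulr0 subrr.
have Comm : forall x, V j (V i x) = (z i j)^* *: V i (V j x).
  by move=> x; rewrite Comm0 scalerA zz' scale1r.
have CommS : forall x, Vs j (Vs i x) = (z i j)^* *: Vs i (Vs j x).
  move=> x; apply: ext => w.
  rewrite ipZ !adjs Comm ipZr conjCK -adjs -adjs.
  by rewrite mulrA zz' mul1r.
have IZ : forall m a x, iter m (V j) (a *: x) = a *: iter m (V j) x.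
  by elim=> [|m IH] a x //=; rewrite IH VZ.
have IB : forall m x y, iter m (V j) (x - y) = iter m (V j) x - iter m (V j) y.
  by elim=> [|m IH] x y //=; rewrite IH VB.
have ISZ : forall m a x, iter m (Vs j) (a *: x) = a *: iter m (Vs j) x.
  by elim=> [|m IH] a x //=; rewrite IH VsZ.
have I1 : forall m x, iter m (Vs j) (V i x) = (z i j)^+m *: V i (iter m (Vs j) x).
  elim=> [|m IH] x /=; first by rewrite scale1r.
  by rewrite IH VsZ R2 scalerA exprSr.
have I2 : forall m x, iter m (V j) (V i x) = ((z i j)^*)^+m *: V i (iter m (V j) x).
  elim=> [|m IH] x /=; first by rewrite scale1r.
  by rewrite IH VZ Comm scalerA exprSr.
have I4 : forall m x, Vs i (iter m (V j) x) = ((z i j)^*)^+m *: iter m (V j) (Vs i x).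
  elim=> [|m IH] x /=; first by rewrite scale1r.
  by rewrite R1 IH VZ scalerA exprSr mulrC.
have I5 : forall m x, iter m (Vs j) (Vs i x) = ((z i j)^*)^+m *: Vs i (iter m (Vs j) x).
  elim=> [|m IH] x /=; first by rewrite scale1r.
  by rewrite IH VsZ CommS scalerA exprSr.
have Q1 : forall m x, V i (iter m (V j) (iter m (Vs j) x))
                      = iter m (V j) (iter m (Vs j) (V i x)).
  by move=> m x; rewrite I1 IZ I2 scalerA -exprMn zz expr1n scale1r.
have Q2 : forall m x, Vs i (iter m (V j) (iter m (Vs j) x))
                      = iter m (V j) (iter m (Vs j) (Vs i x)).
  by move=> m x; rewrite I4 I5 IZ.
have PkE : forall x, Pk x = iter k (V j) (iter k (Vs j) x)
                          - iter k.+1 (V j) (iter k.+1 (Vs j) x).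
  by move=> x; rewrite /Pk /P IB iterSr iterS.
split=> x; rewrite /Q ?PkE ?VB ?VsB ?Q1 ?Q2 //.
Qed.
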